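(* Let $m\ge3$. If the singleton partition $\mathcal S$ is the unique minimizer of $\Delta$ over partitions of $\mathcal M$ with at least two cells, then $\Delta_T(\mathcal S)<\Delta(\mathcal S)$ for every $T\subset\mathcal M$ with $|T|=m-1$.
   Context: Let $\mathcal M=\{1,\dots,m\}$, and let $X_{\mathcal M}$ be jointly distributed finite-valued random variables, with $X_A=(X_i:i\in A)$. For a partition $\mathcal P$ of $\mathcal M$ with $|\mathcal P|\ge2$, $\Delta(\mathcal P)=\frac1{|\mathcal P|-1}[\sum_{A\in\mathcal P}H(X_A)-H(X_{\mathcal M})]$. $\mathcal S=\{\{1\},\dots,\{m\}\}$ is the singleton partition. For $T\subset\mathcal M$ with $|T|=m-1$, $\Delta_T(\mathcal S)=\frac1{m-2}\big[\sum_{i\in T}H(X_i)-H(X_T)\big]$. *)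

(* Defs.v *)
From HB Require Import structures.
From Stdlib Require Import Reals.
From mathcomp Require Import all_boot.

Set Implicit Arguments.
Unset Strict Implicit.
Unset Printing Implicit Defensive.

HB.instance Definition _ :=
  Monoid.isComLaw.Build R (IZR Z0) Rplus (fun a b c => Logic.eq_sym (Rplus_assoc a b c)) Rplus_comm Rplus_0_l.

Notation "\rsum_ ( i | P ) F" := (\big[Rplus/(IZR Z0)]_(i | P) F)
  (at level 41, F at level 41, i at level 50).
Notation "\rsum_ ( i 'in' A ) F" := (\big[Rplus/(IZR Z0)]_(i in A) F)
  (at level 41, F at level 41, i, A at level 50).
Notation "\rsum_ i F" := (\big[Rplus/(IZR Z0)]_i F)
  (at level 41, F at level 41, i at level 0).

Local Open Scope R_scope.

Definition is_pmf (Omega : finType) (P : Omega -> R) : Prop :=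
  (forall w, 0 <= P w) /\ \rsum_w P w = 1.

Section Entropy.
Variables (Omega : finType) (P : Omega -> R) (m : nat).
(* X i : the i-th random variable X_{i+1}, finite-valued since Omega is finite *)
Variable X : 'I_m -> Omega -> nat.

Definition agree (A : {set 'I_m}) (w w' : Omega) : bool :=
  [forall i in A, X i w == X i w'].

Definition prob_at (A : {set 'I_m}) (w : Omega) : R :=
  \rsum_(w' | agree A w w') P w'.

(* Shannon entropy (natural log) of X_A:
   H(X_A) = - sum_w P(w) ln Pr[X_A = X_A(w)] = - sum_x p(x) ln p(x). *)
Definition entropy (A : {set 'I_m}) : R :=
  (- \rsum_w (P w * ln (prob_at A w))).

Definition Delta_part (Pt : {set {set 'I_m}}) : R :=
  ((\rsum_(A in Pt) entropy A - entropy setT) / (INR #|Pt| - 1)).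

Definition singleton_partition : {set {set 'I_m}} := [set [set i] | i : 'I_m].

Definition Delta_T_S (T : {set 'I_m}) : R :=
  ((\rsum_(i in T) entropy [set i] - entropy T) / (INR m - 2)).

End Entropy.

(* Main.v *)
Require Import Defs.
From HB Require Import structures.
From Stdlib Require Import Reals Lra Lia.
From mathcomp Require Import all_boot.

From mathcomp Require Import zify.
Local Open Scope R_scope.

Theorem lemma8 (Omega : finType) (P : Omega -> R) (m : nat)
  (X : 'I_m -> Omega -> nat) :
  is_pmf P ->
  (3 <= m)%N ->
  (forall Pt : {set {set 'I_m}},
      partition Pt [set: 'I_m] -> (2 <= #|Pt|)%N ->
      Pt <> singleton_partition m ->
      Delta_part P X (singleton_partition m) < Delta_part P X Pt) ->
  forall T : {set 'I_m}, #|T| = m.-1 ->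
    Delta_T_S P X T < Delta_part P X (singleton_partition m).
Proof.
move=> _ m3 Hmin T cT.
have cC : #|~: T| = 1%N.
  rewrite cardsCs setCK card_ord cT; case: (m) m3 => // n _ /=; lia.
have [j Ej] := cards1P (introT eqP cC).
have ET : T = [set~ j] by rewrite -Ej setCK.
have jT : j \notin T by rewrite ET !inE eqxx.
have TneJ : T != [set j].
  apply/negP=> /eqP E; move: cT; rewrite E cards1; case: (m) m3 => // n; lia.
set Pt := [set T; [set j]].
have cPt : #|Pt| = 2%N by rewrite cards2 TneJ.
have hPt : partition Pt [set: 'I_m].
  apply/and3P; split.
  - rewrite /cover big_setU1 /= ?big_set1 ?inE ?TneJ //.
    apply/eqP/setP=> i; rewrite !inE ET !inE; by case: (i == j).
  - apply/trivIsetP=> A B /set2P[]-> /set2P[]-> //; rewrite ?eqxx //= => _;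
      rewrite -?setI_eq0 ?ET; apply/eqP/setP=> i; rewrite !inE;
      by case: (i == j); rewrite ?andbF.
  - rewrite !inE; apply/negP=> /orP[] /eqP E.
    + move: cT; rewrite -E cards0; case: (m) m3 => // n; lia.
    + have : j \in [set j] by rewrite inE.
      by rewrite -E inE.
have PtneS : Pt <> singleton_partition m.
  move=> E; have : T \in singleton_partition m by rewrite -E !inE eqxx.
  case/imsetP=> i _ Ei; move: cT; rewrite Ei cards1; case: (m) m3 => // n; lia.
have H := Hmin Pt hPt (ltac:(by rewrite cPt)) PtneS.
move: H; rewrite /Delta_part /Delta_T_S cPt.
have injS : injective (fun i : 'I_m => [set i]) by move=> a b /set1_inj.
have cS : #|singleton_partition m| = m by rewrite card_imset // card_ord.
rewrite cS.
rewrite /singleton_partition big_imset /=; last by move=> a b _ _; apply: injS.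
rewrite big_setU1 /= ?big_set1 ?inE ?TneJ //.
rewrite (bigD1 j) //=.
have -> : \rsum_(i | i != j) entropy P X [set i] = \rsum_(i in T) entropy P X [set i].
  by apply: eq_bigl => i; rewrite ET !inE.
set a := \rsum_(i in T) entropy P X [set i].
set h := entropy P X [set j].
set HT := entropy P X T.
set HM := entropy P X setT.
have Hm : 3 <= INR m by have := le_INR 3 m (ltac:(apply/leP; exact m3)); simpl; lra.
rewrite /= (_ : INR 2 - 1 = 1); last by simpl; lra.
move=> H.
have Hm1 : 0 < INR m - 1 by lra.
have Hm2 : 0 < INR m - 2 by lra.
apply: (Rmult_lt_reg_r ((INR m - 1) * (INR m - 2))); first by nra.
have E1 : (a - HT) / (INR m - 2) * ((INR m - 1) * (INR m - 2)) = (a - HT) * (INR m - 1) by field; lra.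
have E2 : (h + a - HM) / (INR m - 1) * ((INR m - 1) * (INR m - 2)) = (h + a - HM) * (INR m - 2) by field; lra.
rewrite E1 E2.
have : h + a - HM < (HT + h - HM) * (INR m - 1).
  have := Rmult_lt_compat_r (INR m - 1) _ _ Hm1 H.
  have -> : (h + a - HM) / (INR m - 1) * (INR m - 1) = h + a - HM by field; lra.
  by rewrite /Rdiv Rinv_1 Rmult_1_r.
nra.
Qed.
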